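(* Let $d\geq 1$ and let $c>b>0$ be integers with $d$-binomial expansions $b=\binom{b_d}{d}+\cdots+\binom{b_j}{j}$, $b_d>b_{d-1}>\cdots>b_j\geq j\geq 1$, and $c=\binom{c_d}{d}+\cdots+\binom{c_i}{i}$, $c_d>\cdots>c_i\geq i\geq 1$. Then $b^{(d)}=c^{(d)}$ if and only if $j\geq 2$ and $c-b\leq j-1$.
   Context: For a positive integer $d$, every integer $a>0$ has a unique representation (the $d$-binomial or Macaulay expansion) $a=\binom{a_d}{d}+\binom{a_{d-1}}{d-1}+\cdots+\binom{a_j}{j}$ with $a_d>a_{d-1}>\cdots>a_j\geq j\geq 1$. For such an expansion one defines $a^{(d)}=\binom{a_d}{d+1}+\cdots+\binom{a_j}{j+1}$ (with $\binom{m}{r}=0$ for $m<r$). *)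

(* Defs.v *)
From mathcomp Require Import all_boot.
Set Implicit Arguments. Unset Strict Implicit. Unset Printing Implicit Defensive.

(* A d-binomial (Macaulay) expansion of a: the lowest index j and the
   coefficients f k = a_k for j <= k <= d, with
   a = C(a_d,d) + ... + C(a_j,j),  a_d > a_{d-1} > ... > a_j >= j >= 1. *)
Definition is_dexp (d a j : nat) (f : nat -> nat) : Prop :=
  [/\ 1 <= j, j <= d,
      (forall k, j <= k -> k < d -> f k < f k.+1),
      j <= f j &
      a = \sum_(j <= k < d.+1) 'C(f k, k)].

(* a^(d) computed from the expansion (j, f):
   C(a_d, d+1) + ... + C(a_j, j+1). *)
Definition dexp_up (d j : nat) (f : nat -> nat) : nat :=
  \sum_(j <= k < d.+1) 'C(f k, k.+1).

(* Main.v *)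
Require Import Defs.
From mathcomp Require Import all_boot.
Set Implicit Arguments. Unset Strict Implicit. Unset Printing Implicit Defensive.

Lemma bound (e : nat) (He : e <= 1) d j f :
  1 <= j -> j <= d -> (forall k, j <= k -> k < d -> f k < f k.+1) -> j <= f j ->
  \sum_(j <= k < d.+1) 'C(f k, k + e) < 'C((f d).+1, d + e).
Proof.
move=> Hj1 Hjd Hinc Hjf; elim: d Hjd Hinc => [|d IH] Hjd Hinc.
  by move: (leq_trans Hj1 Hjd).
case: (ltngtP j d.+1) Hjd => // [Hlt|Heq] _.
  rewrite big_nat_recr /=; last exact: ltnW.
  have IH' := IH Hlt (fun k h1 h2 => Hinc k h1 (ltnW h2)).
  rewrite addSn binS addnC ltn_add2l.
  apply: leq_trans IH' _; apply: leq_bin2l; exact: Hinc d Hlt (ltnSn d).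
subst j; rewrite big_nat1 addSn binS -addn1 leq_add2l bin_gt0.
 apply: leq_trans Hjf; by rewrite -addn1 leq_add2l.
Qed.

Lemma bound0 d a j f : is_dexp d a j f -> a < 'C((f d).+1, d).
Proof.
case=> H1 H2 H3 H4 ->; have := bound (e:=0) isT H1 H2 H3 H4.
by rewrite addn0; under eq_bigr do rewrite addn0.
Qed.

Lemma bound1 d a j f : is_dexp d a j f -> dexp_up d j f < 'C((f d).+1, d.+1).
Proof.
case=> H1 H2 H3 H4 _; have := bound (e:=1) isT H1 H2 H3 H4.
by rewrite addn1 /dexp_up; under eq_bigr do rewrite addn1.
Qed.

Lemma lowtop d a j f : is_dexp d a j f -> 'C(f d, d) <= a.
Proof.
case=> H1 H2 _ _ ->; rewrite big_nat_recr /=; last by apply: leq_trans H2.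
exact: leq_addl.
Qed.

Lemma topeq d a j f i g : is_dexp d a j f -> is_dexp d a i g -> f d = g d.
Proof.
move=> Hf Hg.
have l1 := lowtop Hf; have l2 := lowtop Hg; have u1 := bound0 Hf; have u2 := bound0 Hg.
case: (ltngtP (f d) (g d)) => // H.
  have H' : 'C((f d).+1, d) <= 'C(g d, d) by apply: leq_bin2l.
  by have := leq_ltn_trans (leq_trans H' l2) u1; rewrite ltnn.
have H' : 'C((g d).+1, d) <= 'C(f d, d) by apply: leq_bin2l.
by have := leq_ltn_trans (leq_trans H' l1) u2; rewrite ltnn.
Qed.

Lemma peel d a j f : is_dexp d.+1 a j f -> j <= d ->
  is_dexp d (a - 'C(f d.+1, d.+1)) j f.
Proof.
case=> H1 H2 H3 H4 Ha Hjd; split => //.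
  by move=> k h1 h2; apply: H3 h1 (ltnW h2).
by rewrite Ha big_nat_recr /= ?addnK //; exact: ltnW.
Qed.

Lemma pos d a j f : is_dexp d.+1 a j f -> j <= d -> 'C(f d.+1, d.+1) < a.
Proof.
case=> H1 H2 H3 H4 Ha Hjd; rewrite Ha big_nat_recr /=; last exact: ltnW.
rewrite -[X in X < _]add0n ltn_add2r big_ltn //.
by apply: leq_trans (leq_addr _ _); rewrite bin_gt0.
Qed.

Lemma single d a f : is_dexp d.+1 a d.+1 f -> a = 'C(f d.+1, d.+1).
Proof. by case=> _ _ _ _ ->; rewrite big_nat1. Qed.

Lemma uniq_exp d : forall a j i f g, is_dexp d a j f -> is_dexp d a i g ->
  j = i /\ (forall k, j <= k <= d -> f k = g k).
Proof.
elim: d => [|d IH] a j i f g Hf Hg.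
  by case: Hf => H1 H2 _ _ _; move: (leq_trans H1 H2).
have Ht := topeq Hf Hg.
have Hj : j <= d.+1 by case: Hf.
have Hi : i <= d.+1 by case: Hg.
case: (ltngtP j d.+1) Hj => // [Hjd|Hjd] _; case: (ltngtP i d.+1) Hi => // [Hid|Hid] _.
- have Hg' : is_dexp d (a - 'C(f d.+1, d.+1)) i g by rewrite Ht; exact: peel Hg Hid.
  have [E1 E2] := IH _ _ _ _ _ (peel Hf Hjd) Hg'.
  split => // k /andP [k1 k2]; case: (ltngtP k d.+1) k2 => // [kl|->] _; last exact: Ht.
  by apply: E2; rewrite k1 -ltnS.
- rewrite Hid in Hg; have := pos Hf Hjd; by rewrite (single Hg) Ht ltnn.
- rewrite Hjd in Hf; have := pos Hg Hid; by rewrite (single Hf) Ht ltnn.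
- split; first by rewrite Hjd Hid.
  move=> k; rewrite Hjd -eqn_leq => /eqP <-; exact: Ht.
Qed.

Lemma fge d a j f : is_dexp d a j f -> forall k, j <= k -> k <= d -> k <= f k.
Proof.
case=> _ _ H3 H4 _; elim=> [|k IH] h1 h2; first exact: leq0n.
case: (ltngtP j k.+1) h1 => // [lt|<-] _; last exact: H4.
by apply: leq_ltn_trans (IH lt (ltnW h2)) (H3 k lt h2).
Qed.

Lemma step2 d a j f : is_dexp d a j f -> 2 <= j ->
  is_dexp d a.+1 j.-1 (fun k => if k == j.-1 then j.-1 else f k) /\
  dexp_up d j.-1 (fun k => if k == j.-1 then j.-1 else f k) = dexp_up d j f.
Proof.
case: j => [|j0] //= [H1 H2 H3 H4 Ha] H2j.
have Hj0 : j0 < d.+1 by apply: leq_trans H2 _.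
have E m : \sum_(j0.+1 <= k < d.+1) 'C(if k == j0 then j0 else f k, k + m)
   = \sum_(j0.+1 <= k < d.+1) 'C(f k, k + m).
  by apply: eq_big_nat => k /andP [k1 _]; rewrite gtn_eqF.
split; last first.
  rewrite /dexp_up big_ltn // eqxx bin_small // add0n.
  have := E 1; under eq_bigr do rewrite addn1; under [X in _ = X -> _]eq_bigr do rewrite addn1.
  by [].
split => //.
- move=> k k1 k2; case: (ltngtP j0 k) k1 => // [lt|<-] _.
    by rewrite (gtn_eqF (leqW lt)) H3.
  rewrite (gtn_eqF (ltnSn j0)); exact: H4.
- by rewrite eqxx.
- rewrite big_ltn // eqxx binn Ha add1n; congr _.+1.
  have := E 0; under eq_bigr do rewrite addn0; under [X in _ = X -> _]eq_bigr do rewrite addn0.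
  by [].
Qed.

Lemma top_only D x : 1 <= D -> D <= x ->
  is_dexp D 'C(x, D) D (fun _ => x) /\ dexp_up D D (fun _ => x) = 'C(x, D.+1).
Proof.
move=> H1 H2; split; last by rewrite /dexp_up big_nat1.
split => //; last by rewrite big_nat1.
by move=> k k1 k2; move: (leq_ltn_trans k1 k2); rewrite ltnn.
Qed.

Lemma upS d j f : j <= d.+1 ->
  dexp_up d.+2 j f = dexp_up d.+1 j f + 'C(f d.+2, d.+3).
Proof. by move=> H; rewrite /dexp_up big_nat_recr //= leqW. Qed.

Lemma step1 d : 1 <= d -> forall a f, is_dexp d a 1 f ->
  exists j' f', is_dexp d a.+1 j' f' /\ dexp_up d 1 f < dexp_up d j' f'.
Proof.
elim: d => [//|d IH] _ a f Hf.
case: d IH Hf => [|d] IH Hf.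
  have Ea := single Hf.
  have Hf1 : 1 <= f 1 by case: Hf.
  have [T1 T2] := top_only (D := 1) (x := (f 1).+1) isT isT.
  exists 1, (fun _ => (f 1).+1); split.
    by move: T1; rewrite !bin1 Ea bin1.
  rewrite T2 /dexp_up big_nat1 binS -[X in X < _]addn0 ltn_add2l bin1; exact: Hf1.
have dpos : 0 < d.+1 by [].
have Hp := peel Hf dpos.
set a0 := a - 'C(f d.+2, d.+2) in Hp.
have [j' [f' [Hf' Hup]]] := IH dpos a0 f Hp.
have Hj' : j' <= d.+1 by case: Hf'.
have Ha : a = a0 + 'C(f d.+2, d.+2) by rewrite /a0 subnK // (lowtop Hf).
case: (ltnP (f' d.+1) (f d.+2)) => Hlt.
  exists j', (fun k => if k == d.+2 then f d.+2 else f' k); split.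
    case: Hf' => H1 H2 H3 H4 Ha0; split => //.
    - exact: leqW.
    - move=> k k1 k2; case: (ltngtP k d.+1) => [kl|kg|->].
      + by rewrite (ltn_eqF (leqW kl)) eqSS (ltn_eqF kl) H3.
      + by move: (leq_ltn_trans kg k2); rewrite ltnn.
      + by rewrite eqxx (ltn_eqF (ltnSn _)).
    - by rewrite (@ltn_eqF j' d.+2 H2).
    - rewrite big_nat_recr /=; last exact: leqW.
      rewrite eqxx Ha -addSn Ha0; congr (_ + _).
      by apply: eq_big_nat => k /andP [_ k2]; rewrite (ltn_eqF k2).
  rewrite upS // upS //.
  rewrite eqxx ltn_add2r.
  have -> : dexp_up d.+1 j' (fun k => if k == d.+2 then f d.+2 else f' k) =
            dexp_up d.+1 j' f'.
    by apply: eq_big_nat => k /andP [_ k2]; rewrite (ltn_eqF k2).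
  exact: Hup.
have Hfd : (f d.+1).+1 <= f d.+2 by case: Hf => _ _ H3 _ _; apply: H3.
have E : a0.+1 = 'C(f d.+2, d.+1).
  apply/eqP; rewrite eqn_leq; apply/andP; split.
    apply: leq_trans (bound0 Hp) _; exact: leq_bin2l.
  apply: leq_trans (lowtop Hf'); exact: leq_bin2l.
have Hfx : d.+2 <= f d.+2 by apply: (fge Hf).
have [T1 T2] := top_only (D := d.+2) (x := (f d.+2).+1) isT (leqW Hfx).
exists d.+2, (fun _ => (f d.+2).+1); split.
  by rewrite Ha -addSn E addnC -binS.
rewrite T2 binS upS // addnC ltn_add2l.
apply: leq_trans (bound1 Hp) _; exact: leq_bin2l.
Qed.

Lemma iter_step d n : forall a j f, is_dexp d a j f ->
  exists j' f', is_dexp d (a + n) j' f' /\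
    (n < j -> dexp_up d j' f' = dexp_up d j f) /\
    (j <= n -> dexp_up d j f < dexp_up d j' f').
Proof.
elim: n => [|n IH] a j f Hf.
  exists j, f; rewrite addn0; split => //; split => // Hj.
  by case: Hf => H1 _ _ _ _; move: (leq_trans H1 Hj).
have Hj1 : 1 <= j by case: Hf.
have Hd : 1 <= d by case: Hf => H1 H2 _ _ _; apply: leq_trans H2.
case: (ltngtP 1 j) Hj1 => // [Hj2|Hj] _.
  have [E1 E2] := step2 Hf Hj2.
  have [j' [f' [H1 [H2 H3]]]] := IH _ _ _ E1.
  exists j', f'; rewrite -addSnnS; split => //; split.
    move=> Hn; rewrite H2 ?E2 //; by rewrite -ltnS prednK // ltnW.
  move=> Hn; rewrite -E2; apply: H3; by rewrite -ltnS prednK // ltnW.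
subst j.
have [j1 [f1 [E1 E2]]] := step1 Hd Hf.
have [j' [f' [H1 [H2 H3]]]] := IH _ _ _ E1.
exists j', f'; rewrite -addSnnS; split => //; split => // _.
case: (ltnP n j1) => Hn; first by rewrite H2.
exact: ltn_trans E2 (H3 Hn).
Qed.

Theorem mainTheorem2 (d b c j i : nat) (fb fc : nat -> nat) :
  1 <= d -> 0 < b -> b < c ->
  is_dexp d b j fb -> is_dexp d c i fc ->
  (dexp_up d j fb = dexp_up d i fc <-> (2 <= j /\ c - b <= j - 1)).
Proof.
move=> Hd Hb Hbc Hf Hg.
have [j' [f' [H1 [H2 H3]]]] := iter_step (c - b) Hf.
rewrite subnKC in H1; last exact: ltnW.
have [E1 E2] := uniq_exp H1 Hg.
have Eup : dexp_up d i fc = dexp_up d j' f'.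
  subst i; apply: eq_big_nat => k /andP [k1 k2]; rewrite E2 // k1 -ltnS //.
rewrite Eup; have Hn : 0 < c - b by rewrite subn_gt0.
have Hj1 : 1 <= j by case: Hf.
split.
  move=> Heq; case: (ltnP (c - b) j) => Hl.
    split; first exact: leq_ltn_trans Hn Hl.
    by rewrite subn1 -ltnS prednK.
  by have := H3 Hl; rewrite Heq ltnn.
case=> _ Hle; rewrite H2 //.
by move: Hle; rewrite subn1 -ltnS prednK.
Qed.
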